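(* Let $\bar b>0$, $0<\epsilon<1$, and suppose $w/6\le \bar w\le 6w$. Then for every edge $e$, the expected number of queries and the expected running time of $\mathrm{Heavy}(e,\bar b,\bar w,\epsilon,m)$ are $O\!\left(\frac{\bar w\sqrt m}{\bar b}\cdot \mathrm{poly}(\log n,1/\epsilon)\right)$.
   Context: Let $G=(V,E)$ be a bipartite graph with bipartition $V=U\cup L$, $n=|V|$, $m=|E|$; $N(v)$ is the neighbor set and $d_v=|N(v)|$ the degree of $v$; for an edge $e=(u,v)$, $d_e=d_u+d_v-2$; $w$ is the number of wedges (paths with two edges) in $G$. A butterfly is a set of four distinct vertices $\{u_1,u_2,v_1,v_2\}$, $u_i\in U$, $v_i\in L$, with all four pairs $u_iv_j$ edges. Fix an arbitrary order $\pi$ of $V$ and write $x\prec z$ if $d_x<d_z$, or $d_x=d_z$ and $x$ precedes $z$ in $\pi$. Access to $G$ is via degree queries, neighbor queries (the $i$-th neighbor of $v$), vertex-pair queries and uniform edge sampling, each costing one query. Procedure $\mathrm{Heavy}(e=(u,v),\bar b,\bar w,\epsilon,m)$: if $\bar w<(\epsilon\bar b)^{1/4}d_e$, return heavy. Otherwise, for $i=1,\dots,t=48\log(2m)$: for $j=1,\dots,s=12\sqrt m\,\bar w/(\epsilon^2\bar b)$: choose $p\in\{u,v\}$ with probability $(d_p-1)/d_e$, let $q$ be the other endpoint of $e$, choose $x_j$ uniformly from $N(p)\setminus\{q\}$ (wedge $(q,p,x_j)$); let $y_j$ be the one of $q,x_j$ with smaller degree; set $R=\lceil d_{y_j}/\sqrt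 m\rceil$; for $k=1,\dots,R$ sample $z$ uniformly from $N(y_j)$ and set $Z_k=d_{y_j}$ if $\{q,p,x_j,z\}$ is a butterfly and $x_j\prec z$, else $Z_k=0$; set $Y_j=\frac1R\sum_kZ_k$. Set $X_i=\frac1s\sum_jY_j$. Return heavy if the median $X$ of the $X_i$ exceeds $\bar b^{3/4}/\epsilon^{1/4}$, light otherwise. *)

(* Defs.v *)
From HB Require Import structures.
From mathcomp Require Import all_boot all_order all_algebra.
From mathcomp Require Import reals exp.
Set Implicit Arguments. Unset Strict Implicit. Unset Printing Implicit Defensive.
Import Order.TTheory GRing.Theory Num.Theory.
Local Open Scope ring_scope.

(* A computation is a finite list of outcomes                         *)
(*   (probability weight, value, (#queries, #time steps)).            *)
Section Dist.
Variable R : realType.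

Definition dist (A : Type) := seq (R * A * (nat * nat)).

Definition dret (A : Type) (a : A) : dist A := [:: (1, a, (0%N, 0%N))].

Definition dbind (A B : Type) (d : dist A) (f : A -> dist B) : dist B :=
  flatten (map (fun x =>
    map (fun y => (x.1.1 * y.1.1, y.1.2, (x.2.1 + y.2.1, x.2.2 + y.2.2)%N))
        (f x.1.2)) d).

Definition dtick (q tm : nat) : dist unit := [:: (1, tt, (q, tm))].

Definition dbern (p : R) : dist bool :=
  [:: (p, true, (0%N, 0%N)); (1 - p, false, (0%N, 0%N))].

Definition dunif (A : Type) (s : seq A) : dist (option A) :=
  if s is [::] then dret None
  else map (fun x => ((size s)%:R^-1, Some x, (0%N, 0%N))) s.

Fixpoint drepeat (A : Type) (n : nat) (c : dist A) : dist (seq A) :=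
  match n with
  | 0%N => dret [::]
  | n'.+1 => dbind c (fun a => dbind (drepeat n' c) (fun l => dret (a :: l)))
  end.

Definition exp_queries (A : Type) (d : dist A) : R :=
  \sum_(x <- d) x.1.1 * (x.2.1)%:R.

Definition exp_time (A : Type) (d : dist A) : R :=
  \sum_(x <- d) x.1.1 * (x.2.2)%:R.

Definition natceil (x : R) : nat := `|Num.ceil x|%N.

Definition mean (s : seq R) : R :=
  if s is [::] then 0 else (\sum_(z <- s) z) / (size s)%:R.

Definition median (s : seq R) : R :=
  nth 0 (sort (fun x y : R => x <= y) s) ((size s).-1./2).

End Dist.

Section Graph.
Variables (V : finType) (adj : rel V).

Definition bipartite_graph (U : {set V}) : Prop :=
  symmetric adj /\ irreflexive adj /\
  (forall x y, adj x y -> (x \in U) != (y \in U)).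

Definition nbhd (v : V) : {set V} := [set y | adj v y].
Definition deg (v : V) : nat := #|nbhd v|.

Definition nedges : nat := ((\sum_(v : V) deg v)./2)%N.
(* w = number of wedges (paths with two edges) *)
Definition nwedges : nat := (\sum_(v : V) 'C(deg v, 2))%N.

Definition butterfly (U : {set V}) (S : {set V}) : bool :=
  [&& #|S| == 4%N, #|S :&: U| == 2%N &
      [forall a in S :&: U, forall b in S :\: U, adj a b]].

Definition prec (pi : V -> nat) (x z : V) : bool :=
  (deg x < deg z)%N || ((deg x == deg z) && (pi x < pi z)%N).

(* Query accounting: every degree / neighbor / vertex-pair query      *)
(* costs one query and one time step; other O(1) work costs time.     *)
Variables (R : realType) (U : {set V}) (pi : V -> nat).

(* one sample Z_k : neighbor query of y, vertex-pair query (the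
   missing edge of the butterfly), degree query of z *)
Definition heavyZ (m : nat) (q p x y : V) : dist R R :=
  dbind (dtick R 3 4) (fun _ =>
  dbind (dunif R (enum (nbhd y))) (fun oz =>
  dret R (match oz with
          | Some z => if butterfly U [set q; p; x; z] && prec pi x z
                      then (deg y)%:R else 0
          | None => 0
          end))).

Definition heavyYcore (m : nat) (q p x : V) : dist R R :=
  let y := if (deg x < deg q)%N then x else q in
  let Rk := natceil ((deg y)%:R / Num.sqrt (m%:R : R)) in
  dbind (drepeat Rk (heavyZ m q p x y)) (fun zs =>
  dbind (dtick R 0 1) (fun _ => dret R (mean zs))).

(* one Y_j: choose p, sample x (neighbor query), query deg x *)
Definition heavyY (m : nat) (u v : V) : dist R R :=
  let de := (deg u + deg v - 2)%N in
  dbind (dtick R 0 1) (fun _ =>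
  dbind (dbern ((deg u).-1%:R / de%:R)) (fun b =>
  let p := if b then u else v in
  let q := if b then v else u in
  dbind (dtick R 2 2) (fun _ =>
  dbind (dunif R (enum (nbhd p :\ q))) (fun ox =>
  match ox with
  | Some x => heavyYcore m q p x
  | None => dret R 0
  end)))).

Definition heavyX (m s : nat) (u v : V) : dist R R :=
  dbind (drepeat s (heavyY m u v)) (fun ys =>
  dbind (dtick R 0 1) (fun _ => dret R (mean ys))).

(* Heavy: returns true for "heavy", false for "light".  Degree queries
   for u and v; median computation charged t*t time steps. *)
Definition Heavy (u v : V) (bb wb eps : R) (m : nat) : dist R bool :=
  dbind (dtick R 2 3) (fun _ =>
  let de := (deg u + deg v - 2)%N in
  if wb < powR (eps * bb) (4%:R^-1) * de%:R then dret R true else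
  let t := natceil (48%:R * ln (2%:R * (m%:R : R))) in
  let s := natceil (12%:R * Num.sqrt (m%:R : R) * wb / (eps ^+ 2 * bb)) in
  dbind (drepeat t (heavyX m s u v)) (fun xs =>
  dbind (dtick R 0 (t * t)) (fun _ =>
  dret R (powR bb (3%:R / 4%:R) / powR eps (4%:R^-1) < median xs)))).

End Graph.

(* Main.v *)
Require Import Defs.
From HB Require Import structures.
From mathcomp Require Import all_boot all_order all_algebra.
From mathcomp Require Import reals exp.
From mathcomp Require Import ring lra zify.
Import Order.TTheory GRing.Theory Num.Theory.
Local Open Scope ring_scope.
Set Implicit Arguments. Unset Strict Implicit.

Section Gen.
Variable R : realType.
Variable c : nat * nat -> nat.
Hypothesis cadd : forall a1 a2 b1 b2, c (a1 + b1, a2 + b2)%N = (c (a1, a2) + c (b1, b2))%N.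

Definition cE A (d : dist R A) : R := \sum_(x <- d) x.1.1 * (c x.2)%:R.
Definition mass A (d : dist R A) : R := \sum_(x <- d) x.1.1.
Definition Ef A (d : dist R A) (g : A -> R) : R := \sum_(x <- d) x.1.1 * g x.1.2.

Lemma mass_bind A B (d : dist R A) (f : A -> dist R B) :
  mass (dbind d f) = Ef d (fun a => mass (f a)).
Proof.
rewrite /mass /Ef /dbind big_flatten big_map /=; apply: eq_bigr => x _.
by rewrite big_map mulr_sumr.
Qed.

Lemma cE_bind A B (d : dist R A) (f : A -> dist R B) :
  cE (dbind d f) = Ef d (fun a => cE (f a)) +
     \sum_(x <- d) x.1.1 * (c x.2)%:R * mass (f x.1.2).
Proof.
rewrite /cE /Ef /mass /dbind big_flatten big_map /= -big_split /=.
apply: eq_bigr => x _.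
rewrite big_map mulr_sumr mulr_sumr -big_split /=; apply: eq_bigr => y _.
case: x => [[w a] [x1 x2]]; case: y => [[w' b] [y1 y2]] /=.
by rewrite cadd natrD; ring.
Qed.

Lemma Ef_const A (d : dist R A) k : Ef d (fun _ => k) = mass d * k.
Proof. by rewrite /Ef /mass mulr_suml. Qed.

Lemma Ef_ext A (d : dist R A) g h : (forall a, g a = h a) -> Ef d g = Ef d h.
Proof. by move=> e; rewrite /Ef; apply: eq_bigr => x _; rewrite e. Qed.

Lemma mass_bind1 A B (d : dist R A) (f : A -> dist R B) :
  mass d = 1 -> (forall a, mass (f a) = 1) -> mass (dbind d f) = 1.
Proof. by move=> h1 h2; rewrite mass_bind (Ef_ext _ h2) Ef_const h1 mulr1. Qed.

Lemma cE_bind1 A B (d : dist R A) (f : A -> dist R B) :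
  (forall a, mass (f a) = 1) -> cE (dbind d f) = cE d + Ef d (fun a => cE (f a)).
Proof.
move=> h; rewrite cE_bind addrC; congr (_ + _).
by rewrite /cE; apply: eq_bigr => x _; rewrite h mulr1.
Qed.

Lemma mass_ret A (a : A) : mass (dret R a) = 1.
Proof. by rewrite /mass /dret big_cons big_nil addr0. Qed.

Hypothesis c0 : c (0, 0)%N = 0%N.

Lemma cE_ret A (a : A) : cE (dret R a) = 0.
Proof. by rewrite /cE /dret big_cons big_nil /= c0 mulr0 addr0. Qed.

Lemma mass_tick q t : mass (dtick R q t) = 1.
Proof. by rewrite /mass big_cons big_nil addr0. Qed.

Lemma cE_tick q t : cE (dtick R q t) = (c (q, t))%:R.
Proof. by rewrite /cE big_cons big_nil addr0 mul1r. Qed.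

Lemma Ef_tick q t g : Ef (dtick R q t) g = g tt.
Proof. by rewrite /Ef big_cons big_nil addr0 mul1r. Qed.

Lemma Ef_ret A (a : A) g : Ef (dret R a) g = g a.
Proof. by rewrite /Ef big_cons big_nil addr0 mul1r. Qed.

Lemma mass_bern p : mass (dbern p) = 1.
Proof. by rewrite /mass !big_cons big_nil /=; ring. Qed.

Lemma cE_bern p : cE (dbern p) = 0.
Proof. by rewrite /cE !big_cons big_nil /= c0; ring. Qed.

Lemma Ef_bern p g : Ef (dbern p) g = p * g true + (1 - p) * g false.
Proof. by rewrite /Ef !big_cons big_nil /= addr0. Qed.

Lemma sum_constS A (s : seq A) (k : R) : \sum_(x <- s) k = k *+ size s.
Proof. by elim: s => [|x s IH]; rewrite ?big_nil // big_cons IH mulrS. Qed.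

Lemma mass_unif A (s : seq A) : mass (dunif R s) = 1.
Proof.
case: s => [|a s]; first exact: mass_ret.
rewrite /mass /dunif big_map sum_constS.
have h : ((size (a :: s))%:R : R) != 0 by rewrite pnatr_eq0.
by rewrite -[_^-1 *+ _]mulr_natr mulVf.
Qed.

Lemma cE_unif A (s : seq A) : cE (dunif R s) = 0.
Proof.
case: s => [|a s]; first exact: cE_ret.
by rewrite /cE /dunif big_map /= big1 // => x _; rewrite c0 mulr0.
Qed.

Lemma Ef_unif A (s : seq A) g : Ef (dunif R s) g =
  if s is [::] then g None else (size s)%:R^-1 * \sum_(x <- s) g (Some x).
Proof.
case: s => [|a s]; first exact: Ef_ret.
by rewrite /Ef /dunif big_map mulr_sumr.
Qed.

Lemma mass_repeat A n (d : dist R A) : mass d = 1 -> mass (drepeat n d) = 1.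
Proof.
move=> h; elim: n => [|n IH] /=; first exact: mass_ret.
apply: mass_bind1 => // a; apply: mass_bind1 => // l; exact: mass_ret.
Qed.

Lemma cE_repeat A n (d : dist R A) : mass d = 1 -> cE (drepeat n d) = n%:R * cE d.
Proof.
move=> h; elim: n => [|n IH] /=; first by rewrite cE_ret mul0r.
rewrite cE_bind1; last by move=> a; apply: mass_bind1 => // [|l];
  [exact: mass_repeat | exact: mass_ret].
have E : forall a, cE (dbind (drepeat n d) (fun l => dret R (a :: l))) = n%:R * cE d.
  move=> a; rewrite cE_bind1; last by move=> l; exact: mass_ret.
  have E2 : forall l : seq A, cE (dret R (a :: l)) = 0 by move=> l; rewrite cE_ret.
  by rewrite IH (Ef_ext _ E2) Ef_const mulr0 addr0.
by rewrite (Ef_ext _ E) Ef_const h mul1r mulrS mulrDl mul1r.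
Qed.

End Gen.

Section G.
Variables (V : finType) (adj : rel V) (R : realType) (U : {set V}) (pi : V -> nat).
Variable c : nat * nat -> nat.
Hypothesis cadd : forall a1 a2 b1 b2, c (a1 + b1, a2 + b2)%N = (c (a1, a2) + c (b1, b2))%N.
Hypothesis c0 : c (0, 0)%N = 0%N.
Hypothesis cle : forall a b, (c (a, b) <= a + b)%N.

Lemma cleR a b : ((c (a, b))%:R : R) <= a%:R + b%:R.
Proof. by rewrite -natrD ler_nat. Qed.

Lemma mass_tb A q t (f : unit -> dist R A) : mass (f tt) = 1 -> mass (dbind (dtick R q t) f) = 1.
Proof. by move=> h; apply: mass_bind1; [exact: mass_tick | case]. Qed.

Lemma cE_tb A q t (f : unit -> dist R A) : mass (f tt) = 1 ->
  cE c (dbind (dtick R q t) f) = (c (q, t))%:R + cE c (f tt).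
Proof. by move=> h; rewrite (cE_bind1 cadd) // ?cE_tick ?Ef_tick //; case. Qed.

Lemma Ef_cE_ret A B (d : dist R A) (h : A -> B) : Ef d (fun a => cE c (dret R (h a))) = 0.
Proof.
have E : forall a, cE c (dret R (h a)) = 0 by move=> a; rewrite cE_ret.
by rewrite (Ef_ext _ E) Ef_const mulr0.
Qed.

Lemma mass_Z m q p x y : mass (@heavyZ V adj R U pi m q p x y) = 1.
Proof.
by apply: mass_tb; apply: mass_bind1 => [|o]; [exact: mass_unif | exact: mass_ret].
Qed.

Lemma cE_Z m q p x y : cE c (@heavyZ V adj R U pi m q p x y) = (c (3%N, 4%N))%:R.
Proof.
rewrite /heavyZ cE_tb; last by apply: mass_bind1 => [|o]; [exact: mass_unif | exact: mass_ret].
rewrite (cE_bind1 cadd); last by move=> o; exact: mass_ret.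
rewrite cE_unif // add0r (Ef_cE_ret _ (fun o => match o with Some z => _ | None => _ end)) addr0; reflexivity.
Qed.

Definition Rk m q x : nat :=
  natceil ((deg adj (if (deg adj x < deg adj q)%N then x else q))%:R / Num.sqrt (m%:R : R)).

Lemma mass_core m q p x : mass (@heavyYcore V adj R U pi m q p x) = 1.
Proof.
apply: mass_bind1 => [|zs]; first by apply: mass_repeat; exact: mass_Z.
by apply: mass_tb; exact: mass_ret.
Qed.

Lemma cE_core m q p x : cE c (@heavyYcore V adj R U pi m q p x) =
   (Rk m q x)%:R * (c (3%N, 4%N))%:R + (c (0%N, 1%N))%:R.
Proof.
rewrite /heavyYcore (cE_bind1 cadd); last by move=> zs; apply: mass_tb; exact: mass_ret.
rewrite cE_repeat // ?mass_Z // cE_Z //.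
have E : forall zs : seq R, cE c (dbind (dtick R 0 1) (fun _ => dret R (mean zs))) = (c (0%N, 1%N))%:R.
  by move=> zs; rewrite cE_tb ?mass_ret // cE_ret // addr0.
by rewrite (Ef_ext _ E) Ef_const mass_repeat ?mass_Z // mul1r.
Qed.

Lemma natceil_le (x : R) : 0 <= x -> (natceil x)%:R <= x + 1.
Proof.
move=> x0; rewrite /natceil natr_absz ger0_norm; last by rewrite ceil_ge0; lra.
by have /andP[h _] := ceil_itv x; rewrite intrD in h; lra.
Qed.


Definition Hf m (p q : V) : R := Ef (dunif R (enum (nbhd adj p :\ q))) (fun ox => cE c (match ox with Some x => @heavyYcore V adj R U pi m q p x | None => dret R 0 end)).

Lemma mass_match m p q (ox : option V) : mass (match ox with Some x => @heavyYcore V adj R U pi m q p x | None => dret R 0 end) = 1.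
Proof. by case: ox => [x|]; [exact: mass_core | exact: mass_ret]. Qed.

Lemma mass_Y m u v : mass (@heavyY V adj R U pi m u v) = 1.
Proof.
apply: mass_tb; apply: mass_bind1 => [|b]; first exact: mass_bern.
apply: mass_tb; apply: mass_bind1 => [|ox]; first exact: mass_unif.
exact: mass_match.
Qed.

Lemma cE_Y m u v : cE c (@heavyY V adj R U pi m u v) =
  (c (0%N, 1%N))%:R + ((deg adj u).-1%:R / (deg adj u + deg adj v - 2)%N%:R * ((c (2%N, 2%N))%:R + Hf m u v)
   + (1 - (deg adj u).-1%:R / (deg adj u + deg adj v - 2)%N%:R) * ((c (2%N, 2%N))%:R + Hf m v u)).
Proof.
rewrite /heavyY cE_tb; last first.
  apply: mass_bind1 => [|b]; first exact: mass_bern.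
  apply: mass_tb; apply: mass_bind1 => [|ox]; first exact: mass_unif.
  exact: mass_match.
rewrite (cE_bind1 cadd); last first.
  move=> b; apply: mass_tb; apply: mass_bind1 => [|ox]; first exact: mass_unif.
  exact: mass_match.
rewrite cE_bern // add0r Ef_bern /=.
rewrite !cE_tb; try (apply: mass_bind1 => [|ox]; [exact: mass_unif | exact: mass_match]).
rewrite !(cE_bind1 cadd); try (move=> ox; exact: mass_match).
by rewrite !cE_unif // !add0r.
Qed.


Lemma Hf_sum m p q : (#|nbhd adj p :\ q|)%:R * Hf m p q =
   \sum_(x in nbhd adj p :\ q) cE c (@heavyYcore V adj R U pi m q p x).
Proof.
rewrite /Hf Ef_unif -big_enum /= cardE.
case: (enum _) => [|a s]; first by rewrite big_nil mul0r.
have h : ((size (a :: s))%:R : R) != 0 by rewrite pnatr_eq0.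
by rewrite mulrA mulfV // mul1r.
Qed.

Lemma Hf_0 m p q : #|nbhd adj p :\ q| = 0%N -> Hf m p q = 0.
Proof.
rewrite /Hf Ef_unif cardE; case: (enum _) => [|a s] //= _.
exact: cE_ret.
Qed.

Lemma core_le m q p x : (1 <= m)%N ->
  cE c (@heavyYcore V adj R U pi m q p x) <=
  8 + 7 * (minn (deg adj x) (deg adj q))%:R / Num.sqrt (m%:R : R).
Proof.
move=> m1; rewrite cE_core.
set r := Num.sqrt _.
have r0 : 0 < r by rewrite sqrtr_gt0 ltr0n.
have hR := natceil_le (x := (deg adj (if (deg adj x < deg adj q)%N then x else q))%:R / r).
have e : (deg adj (if (deg adj x < deg adj q)%N then x else q)) = minn (deg adj x) (deg adj q).
  by rewrite /minn; case: ifP.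
rewrite e in hR; rewrite /Rk e.
have := hR (divr_ge0 (ler0n _ _) (ltW r0)).
have c34 := cleR 3 4; have c01 := cleR 0 1.
set k := (natceil _)%:R.
have k0 : 0 <= k by apply: ler0n.
have c340 : (0:R) <= (c (3%N, 4%N))%:R by apply: ler0n.
set z := (minn _ _)%:R / r.
have -> : 7 * (minn (deg adj x) (deg adj q))%:R / r = 7 * z by rewrite /z mulrA.
move=> hk.
have : k * (c (3%N, 4%N))%:R <= k * 7 by apply: ler_wpM2l => //; lra.
nra.
Qed.


Lemma sum_sub (A : {set V}) (f : V -> nat) : (\sum_(x in A) f x <= \sum_x f x)%N.
Proof. by rewrite [X in (_ <= X)%N](bigID (mem A)) /= leq_addr. Qed.

Lemma S_le m u v (r := Num.sqrt (m%:R : R)) : (1 <= m)%N ->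
  \sum_(x in nbhd adj u :\ v) cE c (@heavyYcore V adj R U pi m v u x) <=
  8 * (#|nbhd adj u :\ v|)%:R + 7 * (\sum_(x in nbhd adj u :\ v) minn (deg adj x) (deg adj v))%:R / r.
Proof.
move=> m1.
apply: le_trans (ler_sum _ (fun x _ => core_le v u x m1)) _.
rewrite big_split /= sumr_const natr_sum mulr_sumr mulr_suml.
by apply: lerD => //; rewrite mulr_natr.
Qed.


Lemma Y_le m u v : symmetric adj -> irreflexive adj -> adj u v -> (1 <= m)%N ->
  (\sum_(x : V) deg adj x <= 2 * m + 1)%N ->
  cE c (@heavyY V adj R U pi m u v) <= 55.
Proof.
move=> sym irr huv m1 hS.
have nuv : u != v by apply/eqP => e; move: huv; rewrite e irr.
have vin : v \in nbhd adj u by rewrite inE.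
have uin : u \in nbhd adj v by rewrite inE sym.
have cu := cardsD1 v (nbhd adj u); rewrite vin in cu.
have cv := cardsD1 u (nbhd adj v); rewrite uin in cv.
rewrite -/(deg adj u) in cu; rewrite -/(deg adj v) in cv.
set Au := nbhd adj u :\ v in cu *; set Av := nbhd adj v :\ u in cv *.
set r := Num.sqrt (m%:R : R).
have r1 : 1 <= r by rewrite -sqrtr1 ler_sqrt // ler1n.
have r2 : r ^+ 2 = m%:R by rewrite sqr_sqrtr // ler0n.
set Tu := (\sum_(x in Au) minn (deg adj x) (deg adj v))%N.
set Tv := (\sum_(x in Av) minn (deg adj x) (deg adj u))%N.
have Tu1 : (Tu <= #|Au| * deg adj v)%N.
  rewrite -sum_nat_const; apply: leq_sum => x _; exact: geq_minr.
have Tv1 : (Tv <= #|Av| * deg adj u)%N.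
  rewrite -sum_nat_const; apply: leq_sum => x _; exact: geq_minr.
have Tu2 : (Tu <= \sum_(x : V) deg adj x)%N.
  apply: leq_trans (sum_sub Au _); apply: leq_sum => x _; exact: geq_minl.
have Tv2 : (Tv <= \sum_(x : V) deg adj x)%N.
  apply: leq_trans (sum_sub Av _); apply: leq_sum => x _; exact: geq_minl.
have Su := S_le u v m1; rewrite -/Au -/r -/Tu in Su.
have Sv := S_le v u m1; rewrite -/Av -/r -/Tv in Sv.
rewrite -Hf_sum in Su; rewrite -Hf_sum in Sv.
rewrite cE_Y.
have de : (deg adj u + deg adj v - 2 = #|Au| + #|Av|)%N by lia.
rewrite de.
have c01 := cleR 0 1; have c22 := cleR 2 2.
case: (posnP (#|Au| + #|Av|)) => hd.
  have h1 : #|Au| = 0%N by lia.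
  have h2 : #|Av| = 0%N by lia.
  rewrite Hf_0 // Hf_0 //.
  have -> : (deg adj u).-1 = 0%N by lia.
  rewrite mul0r subr0 mul1r; lra.
have hT : (Tu + Tv <= (#|Au| + #|Av|) * (#|Au| + #|Av|).+1)%N by nia.
have hT2 : (Tu + Tv <= 6 * m)%N by lia.
set D := (#|Au| + #|Av|)%N in hd hT hT2 *.
have D0 : (0 : R) < D%:R by rewrite ltr0n.
have hTr : ((Tu + Tv)%:R : R) <= 6 * D%:R * r.
  have a1 : ((Tu + Tv)%:R : R) <= D%:R * (D%:R + 1).
    by rewrite natr1 -natrM ler_nat.
  have a2 : ((Tu + Tv)%:R : R) <= 6 * m%:R.
    by rewrite -natrM ler_nat.
  rewrite -r2 in a2.
  case: (lerP r D%:R) => hr; nra.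
have hdu : (deg adj u).-1 = #|Au| by lia.
rewrite hdu.
set a := (#|Au|)%:R; pose b : R := (#|Av|)%:R.
have Dab : (D%:R : R) = a + b by rewrite /D natrD.
set Hu := Hf m u v in Su *; set Hv := Hf m v u in Sv *.
set w := a / D%:R.
have wD : w * D%:R = a by rewrite /w mulfVK // gt_eqF.
have wD' : (1 - w) * D%:R = b by rewrite mulrBl mul1r wD Dab; ring.
have X : (w * Hu + (1 - w) * Hv) * D%:R <= 50 * D%:R.
  have -> : (w * Hu + (1 - w) * Hv) * D%:R = a * Hu + b * Hv.
    by rewrite -wD -wD'; ring.
  have e7 : 7 * (Tu%:R) / r + 7 * (Tv%:R) / r = 7 * ((Tu + Tv)%:R) / r.
    by rewrite natrD; field; rewrite gt_eqF // (lt_le_trans ltr01 r1).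
  have r0 : 0 < r by apply: lt_le_trans r1.
  have e8 : 7 * ((Tu + Tv)%:R) / r <= 42 * D%:R.
    by rewrite ler_pdivrMr //; nra.
  have : a * Hu + b * Hv <= 8 * a + 8 * b + 42 * D%:R.
    by move: Su Sv; rewrite -/a -/b; lra.
  lra.
have X' : w * Hu + (1 - w) * Hv <= 50 by rewrite -(ler_pM2r D0).
have -> : w * ((c (2%N, 2%N))%:R + Hu) + (1 - w) * ((c (2%N, 2%N))%:R + Hv)
          = (c (2%N, 2%N))%:R + (w * Hu + (1 - w) * Hv) by ring.
lra.
Qed.


Lemma mass_X m s u v : mass (@heavyX V adj R U pi m s u v) = 1.
Proof.
apply: mass_bind1 => [|ys]; first by apply: mass_repeat; exact: mass_Y.
by apply: mass_tb; exact: mass_ret.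
Qed.

Lemma cE_X m s u v : cE c (@heavyX V adj R U pi m s u v) =
   s%:R * cE c (@heavyY V adj R U pi m u v) + (c (0%N, 1%N))%:R.
Proof.
rewrite /heavyX (cE_bind1 cadd); last by move=> ys; apply: mass_tb; exact: mass_ret.
rewrite cE_repeat // ?mass_Y //.
have E : forall ys : seq R, cE c (dbind (dtick R 0 1) (fun _ => dret R (mean ys))) = (c (0%N, 1%N))%:R.
  by move=> ys; rewrite cE_tb ?mass_ret // cE_ret // addr0.
by rewrite (Ef_ext _ E) Ef_const mass_repeat ?mass_Y // mul1r.
Qed.

Lemma Heavy_le u v (bb wb eps : R) :
  bipartite_graph adj U -> adj u v -> 0 < bb -> 0 < eps < 1 -> 0 <= wb ->
  cE c (@Heavy V adj R U pi u v bb wb eps (nedges adj)) <=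
  10 ^+ 5 * (wb * Num.sqrt ((nedges adj)%:R : R) / bb + 1)
        * (1 + ln (#|V|%:R : R) + eps^-1) ^+ 3.
Proof.
move=> [sym [irr _]] huv bb0 /andP[e0 e1] wb0.
set m := nedges adj.
set S := (\sum_(x : V) deg adj x)%N.
have nuv : u != v by apply/eqP => e; move: huv; rewrite e irr.
have du1 : (1 <= deg adj u)%N by rewrite card_gt0; apply/set0Pn; exists v; rewrite inE.
have dv1 : (1 <= deg adj v)%N by rewrite card_gt0; apply/set0Pn; exists u; rewrite inE sym.
have S2 : (deg adj u + deg adj v <= S)%N.
  rewrite /S (bigD1 u) //= (bigD1 v) /=; last by rewrite eq_sym.
  by rewrite addnA leq_addr.
have hm : m = S./2 by [].
have m1 : (1 <= m)%N by lia.
have hS : (S <= 2 * m + 1)%N by lia.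
set n := #|V|.
have Sn : (S <= n * n)%N.
  rewrite /S -sum_nat_const; apply: leq_sum => x _; exact: max_card.
have mn : (2 * m <= n * n)%N by lia.
have n1 : (1 <= n)%N by apply/card_gt0P; exists u.
set L := 1 + ln (n%:R : R) + eps^-1.
have ln0 : 0 <= ln (n%:R : R) by apply: ln_ge0; rewrite ler1n.
have ie : 1 <= eps^-1 by rewrite invf_ge1 // ltW.
have L1 : 1 <= L by rewrite /L; lra.
set r := Num.sqrt (m%:R : R).
have r0 : 0 <= r by apply: sqrtr_ge0.
set A := wb * r / bb.
have A0 : 0 <= A by apply: divr_ge0; [apply: mulr_ge0 | apply: ltW].
have c23 := cleR 2 3.
rewrite /Heavy cE_tb; last by case: ifP => _; [exact: mass_ret |
   apply: mass_bind1 => [|xs]; [apply: mass_repeat; exact: mass_X | apply: mass_tb; exact: mass_ret]].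
have P3 : 1 <= (A + 1) * L ^+ 3.
  have : 1 <= L ^+ 3 by rewrite exprn_ege1.
  nra.
case: ifP => _.
  rewrite cE_ret // addr0; lra.
set t := natceil _.
set s := natceil _.
rewrite (cE_bind1 cadd); last by move=> xs; apply: mass_tb; exact: mass_ret.
have E : forall xs : seq R, cE c (dbind (dtick R 0 (t * t)) (fun _ => dret R
     (powR bb (3%:R / 4%:R) / powR eps (4%:R^-1) < median xs))) = (c (0%N, (t * t)%N))%:R.
  by move=> xs; rewrite cE_tb ?mass_ret // cE_ret // addr0.
rewrite (Ef_ext _ E) Ef_const mass_repeat ?mass_X // mul1r cE_repeat ?mass_X // cE_X.
have hY := Y_le sym irr huv m1 hS.
set Y := cE c _ in hY *.
have m1R : (1 : R) <= m%:R by rewrite ler1n.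
have hT : (t%:R : R) <= 96 * L.
  have l0 : 0 <= ln (2 * (m%:R : R)) by apply: ln_ge0; lra.
  have l48 : 0 <= 48 * ln (2 * (m%:R : R)) by apply: mulr_ge0.
  have := natceil_le l48; rewrite -/t => ht.
  have : ln (2 * (m%:R : R)) <= 2 * ln (n%:R : R).
    have n0 : (0 : R) < n%:R by rewrite ltr0n.
    have e2 := lnXn 2 n0; rewrite mulr2n in e2.
    have : ln (2 * (m%:R : R)) <= ln (n%:R ^+ 2).
      rewrite ler_ln ?posrE ?exprn_gt0 //; last lra.
      by rewrite -natrX -[2]/(2%:R) -natrM ler_nat expnS expn1.
    lra.
  move=> hl; rewrite /L; lra.
have hs : (s%:R : R) <= 12 * A * L ^+ 2 + 1.
  have a0 : 0 <= 12 * r * wb / (eps ^+ 2 * bb).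
    apply: divr_ge0; last by apply: mulr_ge0; [apply: exprn_ge0; lra | lra].
    by apply: mulr_ge0 => //; apply: mulr_ge0.
  have := natceil_le a0; rewrite -/s => hs.
  have eq : 12 * r * wb / (eps ^+ 2 * bb) = 12 * A * eps^-1 ^+ 2.
    by rewrite /A; field; apply/andP; split; rewrite gt_eqF.
  rewrite eq in hs.
  have : eps^-1 ^+ 2 <= L ^+ 2.
    by rewrite lerXn2r ?nnegrE //; rewrite /L; lra.
  nra.
have c01 := cleR 0 1.
have ctt := cleR 0 (t * t).
rewrite natrM add0r in ctt.
have T0 : (0 : R) <= t%:R by apply: ler0n.
have s0 : (0 : R) <= s%:R by apply: ler0n.
set T := (t%:R : R) in hT T0 ctt *.
set s' := (s%:R : R) in hs s0 *.
set B := 55 * (12 * A * L ^+ 2 + 1) + 1.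
have hB : s' * Y + (c (0%N, 1%N))%:R <= B.
  have : s' * Y <= s' * 55 by apply: ler_wpM2l.
  rewrite /B; nra.
have B0 : 0 <= B by rewrite /B; nra.
have h2 : T * (s' * Y + (c (0%N, 1%N))%:R) <= 96 * L * B.
  apply: le_trans (ler_wpM2l T0 hB) _; exact: ler_wpM2r.
have h3 : T * T <= (96 * L) * (96 * L) by apply: ler_pM.
have L2 : L <= L ^+ 2 by rewrite expr2; nra.
have L3 : L ^+ 2 <= L ^+ 3 by rewrite exprS; nra.
have AL : 0 <= A * L ^+ 3 by apply: mulr_ge0 => //; lra.
have e : 96 * L * B + (96 * L) * (96 * L) + 5 =
   (96 * 55 * 12) * (A * L ^+ 3) + 96 * 56 * L + 96 * 96 * L ^+ 2 + 5.
  by rewrite /B; ring.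
have e2 : 10 ^+ 5 * (A + 1) * L ^+ 3 = 10 ^+ 5 * (A * L ^+ 3) + 10 ^+ 5 * L ^+ 3 by ring.
have e3 : (10 : R) ^+ 5 = 100 * 1000 by rewrite !exprS expr0; lra.
rewrite e2 e3.
lra.
Qed.

End G.

Unset Implicit Arguments.

Theorem lemma8 (R : realType) :
  exists (C : R) (k : nat), 0 < C /\
  forall (V : finType) (adj : rel V) (U : {set V}) (pi : V -> nat)
         (u v : V) (bb wb eps : R),
    bipartite_graph adj U -> injective pi -> adj u v ->
    0 < bb -> 0 < eps < 1 ->
    (nwedges adj)%:R / 6%:R <= wb <= 6%:R * (nwedges adj)%:R ->
    let bound := C * (wb * Num.sqrt ((nedges adj)%:R : R) / bb + 1)
                   * (1 + ln (#|V|%:R : R) + eps^-1) ^+ k in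
    exp_queries (@Heavy V adj R U pi u v bb wb eps (nedges adj)) <= bound /\
    exp_time (@Heavy V adj R U pi u v bb wb eps (nedges adj)) <= bound.
Proof.
exists (10 ^+ 5), 3%N; split; first by rewrite exprn_gt0.
move=> V adj U pi u v bb wb eps hG _ huv hbb heps /andP[hw _] bound.
have wb0 : 0 <= wb.
  apply: le_trans hw; apply: divr_ge0; exact: ler0n.
split.
- exact: (@Heavy_le V adj R U pi (fun p => p.1) (fun _ _ _ _ => erefl) erefl
            (fun a b => leq_addr b a) u v bb wb eps hG huv hbb heps wb0).
- exact: (@Heavy_le V adj R U pi (fun p => p.2) (fun _ _ _ _ => erefl) erefl
            (fun a b => leq_addl a b) u v bb wb eps hG huv hbb heps wb0).
Qed.
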